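(* Let $\varepsilon>0$, $0<\tau\le\varepsilon$ and $\lambda:=\tau/\varepsilon$. Let $u_n\in\mathcal V_{[0,1]}$ and let $(u_{n+1},\beta_{n+1})$ with $\beta_{n+1}\in\mathcal B(u_{n+1})$ satisfy \[ u_{n+1} -e^{-\tau\Delta}u_n-\lambda u_{n+1}+\lambda\overline{u_{n+1}}\mathbf{1} =\lambda\beta_{n+1} -\lambda\overline{\beta_{n+1}}\mathbf{1}. \] Suppose $\bar u:=\overline{u_n}=\overline{u_{n+1}}\in(0,1)$. Then $(\beta_{n+1})_i-\overline{\beta_{n+1}}\in[\bar u-1,\bar u]$ and $(\beta_{n+1})_i\in[-1,1]$ for all $i\in V$.
   Context: $G=(V,E)$ is a finite, simple, connected, undirected graph with weights $\omega_{ij}=\omega_{ji}>0$ for $ij\in E$, $\omega_{ij}=0$ otherwise; $d_i=\sum_j\omega_{ij}$, $r\in[0,1]$ fixed. $\mathcal V$ = functions $V\to\mathbb R$ with $\langle u,v\rangle_{\mathcal V}=\sum_i u_iv_id_i^r$; $\mathcal V_{[0,1]}$ = functions $V\to[0,1]$. $(\Delta u)_i=d_i^{-r}\sum_j\omega_{ij}(u_i-u_j)$, $e^{-\tau\Delta}$ its matrix exponential. $\mathbf 1$ all-ones; $\mathcal M(u)=\langle u,\mathbf 1\rangle_{\mathcal V}$; $\bar v=\mathcal M(v)/\mathcal M(\mathbf 1)$. For $u\in\mathcal V_{[0,1]}$, $\mathcal B(u)$ = set of $\beta\in\mathcal V$ with $\beta_i\ge0$ if $u_i=0$, $\beta_i=0$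 if $0<u_i<1$, $\beta_i\le0$ if $u_i=1$; $\mathcal B(u)=\emptyset$ otherwise. *)

(* Defs.v *)
From HB Require Import structures.
From mathcomp Require Import all_boot all_order all_algebra.
From mathcomp Require Import all_classical all_reals all_analysis.
Set Implicit Arguments. Unset Strict Implicit. Unset Printing Implicit Defensive.
Import Order.TTheory GRing.Theory Num.Theory.
Local Open Scope ring_scope.

Section GraphDefs.
Variables (R : realType) (T : finType).

Definition weighted_graph (omega : T -> T -> R) : Prop :=
  [/\ forall i j, omega i j = omega j i,
      forall i j, 0 <= omega i j,
      forall i, omega i i = 0
    & forall i j, connect [rel a b | 0 < omega a b] i j].

Definition degree (omega : T -> T -> R) (i : T) : R := \sum_(j : T) omega i j.

Definition graph_laplacian (omega : T -> T -> R) (r : R) (u : T -> R) : T -> R :=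
  fun i => (powR (degree omega i) r)^-1 * \sum_(j : T) omega i j * (u i - u j).

(* (e^{-tau Delta} u)_i = lim_N sum_{k<N} (-tau)^k / k! (Delta^k u)_i
   (matrix exponential, as the entrywise limit of its power series). *)
Definition heat_semigroup (omega : T -> T -> R) (r tau : R) (u : T -> R) : T -> R :=
  fun i => limn (fun N : nat =>
    \sum_(k < N) ((- tau) ^+ k / (k`!)%:R) * iter k (graph_laplacian omega r) u i).

Definition mass (omega : T -> T -> R) (r : R) (u : T -> R) : R :=
  \sum_(i : T) u i * powR (degree omega i) r.

Definition mean (omega : T -> T -> R) (r : R) (v : T -> R) : R :=
  mass omega r v / mass omega r (fun _ => 1).

Definition in_unit_interval (u : T -> R) : Prop := forall i, 0 <= u i <= 1.

Definition in_B (u beta : T -> R) : Prop :=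
  in_unit_interval u /\
  forall i, [/\ u i = 0 -> 0 <= beta i,
               0 < u i < 1 -> beta i = 0
             & u i = 1 -> beta i <= 0].

End GraphDefs.

(* Main.v *)
Require Import Defs.
From HB Require Import structures.
From mathcomp Require Import all_boot all_order all_algebra.
From mathcomp Require Import all_classical all_reals all_analysis.
From mathcomp Require Import ring lra zify.
Import Order.TTheory GRing.Theory Num.Theory.
Import numFieldNormedType.Exports.
Set Implicit Arguments. Unset Strict Implicit. Unset Printing Implicit Defensive.
Local Open Scope classical_set_scope.
Local Open Scope ring_scope.

Lemma tri (R : realType) (f : nat -> nat -> R) N :
  \sum_(k < N) \sum_(j < k.+1) f j (k - j)%N =
  \sum_(j < N) \sum_(m < N) (if (j + m < N)%N then f j m else 0).
Proof.
elim: N => [|N IH]; first by rewrite !big_ord0.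
rewrite big_ord_recr /= IH.
have E : forall j m : nat, (if (j + m < N.+1)%N then f j m else 0) =
   (if (j + m < N)%N then f j m else 0) + (if (m == N - j)%N && (j <= N)%N then f j m else 0).
  move=> j m; rewrite ltnS leq_eqVlt.
  case: (ltngtP (j + m) N) => H /=.
  - have -> : (m == N - j)%N && (j <= N)%N = false by apply/negbTE/negP => /andP[/eqP ? ?]; lia.
    by rewrite addr0.
  - have -> : (m == N - j)%N && (j <= N)%N = false by apply/negbTE/negP => /andP[/eqP ? ?]; lia.
    by rewrite addr0.
  - have -> : (m == N - j)%N by apply/eqP; lia.
    have -> : (j <= N)%N by lia.
    by rewrite add0r.
rewrite [RHS](_ : _ = \sum_(j < N.+1) \sum_(m < N.+1) (if (j + m < N)%N then f j m else 0)
  + \sum_(j < N.+1) \sum_(m < N.+1) (if (m == N - j :> nat)%N && (j <= N)%N then f j m else 0)); last first.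
  rewrite -big_split; apply: eq_bigr => j _; rewrite -big_split; apply: eq_bigr => m _; exact: E.
congr (_ + _).
  rewrite [RHS]big_ord_recr /= [X in _ + X]big1 ?addr0; last first.
    by move=> m _; rewrite ifF //; apply/negbTE; rewrite -leqNgt leq_addr.
  apply: eq_bigr => j _; rewrite [RHS]big_ord_recr /= ifF ?addr0 //.
  by apply/negbTE; rewrite -leqNgt leq_addl.
apply: eq_bigr => j _.
rewrite -big_mkcond /=.
have hj : (j <= N)%N by rewrite -ltnS.
under eq_bigl do rewrite hj andbT.
by rewrite big_ord1_eq ltnS leq_subr.
Qed.

Lemma binf (R : realType) k i : (i <= k)%N ->
  ('C(k, i)%:R / k`!%:R : R) = (i`!%:R)^-1 * ((k - i)`!%:R)^-1.
Proof.
move=> H; have := bin_fact H.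
move/(congr1 (fun n => n%:R : R)); rewrite !natrM => <-.
have h1 : (i`!%:R : R) != 0 by rewrite pnatr_eq0 -lt0n fact_gt0.
have h2 : ((k - i)`!%:R : R) != 0 by rewrite pnatr_eq0 -lt0n fact_gt0.
have h3 : ('C(k, i)%:R : R) != 0 by rewrite pnatr_eq0 -lt0n bin_gt0.
by field; rewrite h1 h2 h3.
Qed.

Lemma exp_conv (R : realType) (al : R) k :
  \sum_(j < k.+1) (al ^+ j / j`!%:R) * (al ^+ (k - j) / (k - j)`!%:R) =
  (al + al) ^+ k / k`!%:R.
Proof.
rewrite exprDn mulr_suml; apply: eq_bigr => j _.
have hj : (j <= k)%N by rewrite -ltnS.
rewrite -(mulr_natr (al ^+ (k - j) * al ^+ j)) -(mulrA _ (_%:R)) binf //; ring.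
Qed.

Lemma expc (R : realType) (y : R) n : exp_coeff y n = y ^+ n / n`!%:R.
Proof. by []. Qed.

Lemma cvg_exp_series (R : realType) (y : R) : series (exp_coeff y) @ \oo --> expR y.
Proof. exact: (is_cvg_series_exp_coeff y). Qed.

Lemma ser_ord (R : realType) (u : nat -> R) N : series u N = \sum_(k < N) u k.
Proof. by rewrite /series /= big_mkord. Qed.

Lemma cauchy_pos (R : realType) (al : R) (x : nat -> R) : 0 <= al ->
  (forall j, 0 <= x j <= al ^+ j / j`!%:R) ->
  exists l, (fun N => \sum_(k < N) \sum_(j < k.+1) x j * ((- al) ^+ (k - j) / (k - j)`!%:R))
     @ \oo --> l /\ 0 <= l <= 1.
Proof.
move=> al0 hx.
pose a := exp_coeff al.
pose e := exp_coeff (- al).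
have ha : forall j, 0 <= a j by move=> j; exact: exp_coeff_ge0.
have ea : forall j, `|e j| = a j.
  by move=> j; rewrite /e /a !expc normrM normrX normrN ger0_norm // ger0_norm.
pose Xs := series x.
have Xnd : nondecreasing_seq Xs.
  by apply: nondecreasing_series => n _ _; case/andP: (hx n).
have And : nondecreasing_seq (series a).
  by apply: nondecreasing_series => n _ _; exact: ha.
have Acv := @cvg_exp_series R al.
have Ale : forall n, series a n <= expR al.
  move=> n; have := nondecreasing_cvgn_le And (is_cvg_series_exp_coeff al) n.
  by rewrite /expR.
have XA : forall n, Xs n <= series a n.
  move=> n; rewrite /Xs /series /=; apply: ler_sum => j _; by case/andP: (hx j).
have Xcv : cvgn Xs.
  apply: nondecreasing_is_cvgn => //; exists (expR al) => _ [n _ <-].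
  exact: le_trans (XA n) (Ale n).
set X := limn Xs.
have X0 : 0 <= X.
  apply: limr_ge => //; near=> n; rewrite /Xs /series /=.
  by apply: sumr_ge0 => j _; case/andP: (hx j).
have X1 : X <= expR al.
  by apply: limr_le => //; near=> n; exact: le_trans (XA n) (Ale n).
pose P N := \sum_(k < N) \sum_(j < k.+1) x j * ((- al) ^+ (k - j) / (k - j)`!%:R).
pose Q N := Xs N * series e N.
have Qcv : Q @ \oo --> X * expR (- al).
  exact: cvgM Xcv (@cvg_exp_series R (- al)).
pose DA N := series a N * series a N - series (exp_coeff (al + al)) N.
have DAcv : DA @ \oo --> 0.
  have -> : (0 : R) = expR al * expR al - expR (al + al) by rewrite expRD subrr.
  apply: (cvgB (f := fun N => series a N * series a N) (g := series (exp_coeff (al + al)))); [exact: cvgM | exact: cvg_exp_series].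
have DAE : forall N, DA N = \sum_(j < N) \sum_(m < N) (if (j + m < N)%N then 0 else a j * a m).
  move=> N; rewrite /DA !ser_ord.
  have -> : \sum_(k < N) exp_coeff (al + al) k =
     \sum_(k < N) \sum_(j < k.+1) a j * a (k - j)%N.
    by apply: eq_bigr => k _; rewrite expc -exp_conv.
  rewrite (@tri R (fun j m => a j * a m)) mulr_suml -sumrB; apply: eq_bigr => j _.
  rewrite mulr_sumr -sumrB; apply: eq_bigr => m _.
  by case: ifP; rewrite ?subrr // subr0.
have DE : forall N, Q N - P N = \sum_(j < N) \sum_(m < N) (if (j + m < N)%N then 0 else x j * e m).
  move=> N; rewrite /Q /P /Xs !ser_ord (@tri R (fun j m => x j * e m)) mulr_suml -sumrB; apply: eq_bigr => j _.
  rewrite mulr_sumr -sumrB; apply: eq_bigr => m _.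
  by case: ifP; rewrite ?subrr // subr0.
have Dle : forall N, `|Q N - P N| <= DA N.
  move=> N; rewrite DE DAE; apply: le_trans (ler_norm_sum _ _ _) _.
  apply: ler_sum => j _; apply: le_trans (ler_norm_sum _ _ _) _.
  apply: ler_sum => m _; case: ifP => _; first by rewrite normr0.
  rewrite normrM ea; apply: ler_wpM2r => //.
  by case/andP: (hx j) => h1 h2; rewrite ger0_norm.
have Dcv : (fun N => Q N - P N) @ \oo --> 0.
  apply: (@squeeze_cvgr _ _ _ _ (fun N => - DA N) DA).
  - by near=> N; rewrite -ler_norml; exact: Dle.
  - by rewrite -oppr0; apply: cvgN.
  - exact: DAcv.
exists (X * expR (- al)); split.
  suff : P @ \oo --> X * expR (- al) by [].
  have -> : P = (fun N => Q N - (Q N - P N)) by apply/funext => N; rewrite subKr.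
  by rewrite -[X * _]subr0; apply: cvgB.
apply/andP; split; first by rewrite mulr_ge0 // expR_ge0.
rewrite expRN; have hE : expR al != 0 by rewrite gt_eqF // expR_gt0.
rewrite -(divff hE) ler_wpM2r // invr_ge0 expR_ge0 //.
Unshelve. all: by end_near.
Qed.
Definition cf (R : realType) (T : finType) (omega : T -> T -> R) (r : R) (i : T) : R :=
  (powR (Defs.degree omega i) r)^-1.
Definition lc (R : realType) (T : finType) (omega : T -> T -> R) (r : R) (i j : T) : R :=
  cf omega r i * ((i == j)%:R * Defs.degree omega i - omega i j).
Definition vecf (R : realType) (T : finType) (v : T -> R) : 'cV[R]_#|T| :=
  \col_a v (enum_val a).
Definition Am (R : realType) (T : finType) (omega : T -> T -> R) (r tau : R) : 'M[R]_#|T| :=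
  \matrix_(a, b) (- tau * lc omega r (enum_val a) (enum_val b)).

Lemma lap_lin (R : realType) (T : finType) (omega : T -> T -> R) (r : R) v i :
  graph_laplacian omega r v i = \sum_j lc omega r i j * v j.
Proof.
rewrite /graph_laplacian /lc -/(cf omega r i).
under [RHS]eq_bigr do rewrite -mulrA.
rewrite -mulr_sumr; congr (_ * _).
under eq_bigr do rewrite mulrBr.
under [RHS]eq_bigr do rewrite mulrBl.
rewrite !sumrB; apply: (congr1 (fun x => x - _)).
rewrite [in RHS](bigD1 i) //= eqxx mul1r [X in _ + X]big1 ?addr0; first by rewrite /Defs.degree mulr_suml.
by move=> j /negPf; rewrite eq_sym => ->; rewrite mul0r mul0r.
Qed.

Lemma sum_enum (R : realType) (T : finType) (F : T -> R) :
  \sum_(j : T) F j = \sum_(a < #|T|) F (enum_val a).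
Proof. rewrite -(big_enum_val (A := T) F). by apply: eq_bigl => x; rewrite inE. Qed.

Lemma lapM (R : realType) (T : finType) (omega : T -> T -> R) (r tau : R) (u : T -> R) k :
  vecf (fun i => (- tau) ^+ k * iter k (graph_laplacian omega r) u i) = Am omega r tau ^+ k *m vecf u.
Proof.
elim: k => [|k IH].
  by rewrite expr0 mul1mx; apply/matrixP => a b; rewrite !mxE mul1r.
rewrite [Am _ _ _ ^+ _]exprS (_ : forall X Y : 'M[R]_#|T|, X * Y = X *m Y) // -mulmxA -IH; apply/matrixP => a b; rewrite !mxE /= lap_lin.
rewrite sum_enum exprS -mulrA mulr_sumr mulr_sumr; apply: eq_bigr => c _.
by rewrite !mxE; ring.
Qed.

Lemma mulmxMn' (R : realType) m n p (A : 'M[R]_(m, n)) (B : 'M[R]_(n, p)) k :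
  (A *+ k) *m B = (A *m B) *+ k.
Proof.
elim: k => [|k IH]; first by rewrite !mulr0n mul0mx.
by rewrite !mulrS mulmxDl IH.
Qed.

Lemma scal_exp (R : realType) n (a : R) k : ((a%:M : 'M[R]_n) ^+ k) = (a ^+ k)%:M.
Proof.
elim: k => [|k IH]; first by rewrite !expr0.
by rewrite !exprS IH scalar_mxM.
Qed.

Definition alph (R : realType) (T : finType) (omega : T -> T -> R) (r tau : R) : R :=
  tau * \sum_i cf omega r i * Defs.degree omega i.

Definition Gm (R : realType) (T : finType) (omega : T -> T -> R) (r tau : R) : 'M[R]_#|T| :=
  Am omega r tau + (alph omega r tau)%:M.

Lemma lc_sum (R : realType) (T : finType) (omega : T -> T -> R) (r : R) i :
  \sum_j lc omega r i j = 0.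
Proof.
have := lap_lin omega r (fun _ => 1) i.
rewrite /graph_laplacian.
under eq_bigr do rewrite subrr mulr0.
rewrite big1 // mulr0 => /esym E.
by rewrite -[RHS]E; apply: eq_bigr => j _; rewrite mulr1.
Qed.

Lemma Gm_ge0 (R : realType) (T : finType) (omega : T -> T -> R) (r tau : R) :
  (forall i j, 0 <= omega i j) -> 0 <= tau -> forall a b, 0 <= Gm omega r tau a b.
Proof.
move=> w0 t0 a b.
have cf0 : forall i, 0 <= cf omega r i by move=> i; rewrite /cf invr_ge0 powR_ge0.
have d0 : forall i, 0 <= Defs.degree omega i by move=> i; apply: sumr_ge0.
rewrite /Gm !mxE /lc.
case: (eqVneq a b) => [<-|nab].
  rewrite eqxx mulr1n mul1r /alph.
  set i := enum_val a.
  have : cf omega r i * Defs.degree omega i <= \sum_i cf omega r i * Defs.degree omega i.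
    rewrite (bigD1 i) //= lerDl; apply: sumr_ge0 => j _; exact: mulr_ge0.
  have := w0 i i; have := cf0 i; have := d0 i; move: (cf omega r i) (Defs.degree omega i) (omega i i) => c d w.
  move=> hd hc hw h.
  have h1 : 0 <= tau * (c * w) by rewrite !mulr_ge0.
  have h2 : tau * (c * d) <= tau * \sum_i0 cf omega r i0 * Defs.degree omega i0 by apply: ler_wpM2l.
  set S := tau * \sum_i0 _.

  have -> : - tau * (c * (d - w)) + S = (S - tau * (c * d)) + tau * (c * w) by ring.
  by rewrite addr_ge0 // subr_ge0.
have ne : (enum_val a == enum_val b) = false.
  by apply/negbTE; apply: contra nab => /eqP /enum_val_inj ->.
rewrite ne mulr0n addr0 mul0r add0r.
rewrite (_ : forall x y z : R, - x * (y * (- z)) = x * (y * z)); last by move=> *; ring.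
by rewrite mulr_ge0 // mulr_ge0.
Qed.

Lemma Gm_sum (R : realType) (T : finType) (omega : T -> T -> R) (r tau : R) a :
  \sum_b Gm omega r tau a b = alph omega r tau.
Proof.
rewrite /Gm; under eq_bigr do rewrite !mxE.
rewrite big_split /= -mulr_sumr -sum_enum lc_sum mulr0 add0r.
rewrite (bigD1 a) //= eqxx mulr1n big1 ?addr0 // => b /negbTE.
by rewrite eq_sym => ->.
Qed.

Lemma alph_ge0 (R : realType) (T : finType) (omega : T -> T -> R) (r tau : R) :
  (forall i j, 0 <= omega i j) -> 0 <= tau -> 0 <= alph omega r tau.
Proof.
move=> w0 t0; rewrite /alph mulr_ge0 // sumr_ge0 // => i _.
by rewrite mulr_ge0 // ?invr_ge0 ?powR_ge0 // sumr_ge0.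
Qed.

Lemma g_bounds (R : realType) (T : finType) (omega : T -> T -> R) (r tau : R) (u : T -> R) :
  (forall i j, 0 <= omega i j) -> 0 <= tau -> (forall i, 0 <= u i <= 1) ->
  forall j a, 0 <= (Gm omega r tau ^+ j *m vecf u) a 0 <= alph omega r tau ^+ j.
Proof.
move=> w0 t0 u01; elim => [|j IH] a.
  by rewrite expr0 mul1mx expr0 mxE.
rewrite [Gm _ _ _ ^+ _]exprS (_ : forall X Y : 'M[R]_#|T|, X * Y = X *m Y) // -mulmxA mxE.
apply/andP; split.
  apply: sumr_ge0 => b _; apply: mulr_ge0; first exact: Gm_ge0.
  by case/andP: (IH b).
apply: (@le_trans _ _ (\sum_b Gm omega r tau a b * alph omega r tau ^+ j)).
  apply: ler_sum => b _; apply: ler_wpM2l; first exact: Gm_ge0.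
  by case/andP: (IH b).
by rewrite -mulr_suml Gm_sum exprS.
Qed.

Lemma heat01 (R : realType) (T : finType) (omega : T -> T -> R) (r tau : R) (u : T -> R) :
  (forall i j, 0 <= omega i j) -> 0 <= tau -> (forall i, 0 <= u i <= 1) ->
  forall i, 0 <= heat_semigroup omega r tau u i <= 1.
Proof.
move=> w0 t0 u01 i.
set al := alph omega r tau.
have al0 : 0 <= al by exact: alph_ge0.
set a := enum_rank i.
pose x j := (Gm omega r tau ^+ j *m vecf u) a 0 / j`!%:R.
have hx : forall j, 0 <= x j <= al ^+ j / j`!%:R.
  move=> j; have /andP[h1 h2] := g_bounds r w0 t0 u01 j a.
  have f0 : 0 <= (j`!%:R : R)^-1 by rewrite invr_ge0.
  by rewrite /x mulr_ge0 //= ler_wpM2r.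
have [l [Pcv hl]] := cauchy_pos al0 hx.
have AmE : Am omega r tau = (- al)%:M + Gm omega r tau.
  by rewrite /Gm addrCA raddfN /= addNr addr0.
have E : (fun N => \sum_(k < N) ((- tau) ^+ k / k`!%:R) * iter k (graph_laplacian omega r) u i) =
  (fun N => \sum_(k < N) \sum_(j < k.+1) x j * ((- al) ^+ (k - j) / (k - j)`!%:R)).
  apply/funext => N; apply: eq_bigr => k _.
  rewrite mulrAC.
  have -> : (- tau) ^+ k * iter k (graph_laplacian omega r) u i =
     (Am omega r tau ^+ k *m vecf u) a 0.
    by rewrite -lapM mxE /a enum_rankK.
  rewrite AmE (exprDn_comm _ (esym (scalar_mxC _ _))) mulmx_suml summxE mulr_suml.
  apply: eq_bigr => j _.
  have hj : (j <= k)%N by rewrite -ltnS.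
  rewrite mulmxMn' scal_exp (_ : forall X Y : 'M[R]_#|T|, X * Y = X *m Y) //.
  rewrite -mulmxA mul_scalar_mx mulmxnE mxE /x.
  rewrite -(mulr_natr ((- al) ^+ (k - j) * _)) -(mulrA _ (_%:R)) binf //; ring.
rewrite /heat_semigroup E (cvg_lim _ Pcv) //.
Qed.

Theorem lemma38 (R : realType) (T : finType) (omega : T -> T -> R) (r : R)
  (eps tau : R) (un un1 beta : T -> R) :
  weighted_graph omega ->
  0 <= r <= 1 ->
  0 < eps -> 0 < tau -> tau <= eps ->
  in_unit_interval un ->
  in_B un1 beta ->
  (forall i,
     un1 i - heat_semigroup omega r tau un i - (tau / eps) * un1 i
       + (tau / eps) * mean omega r un1
     = (tau / eps) * beta i - (tau / eps) * mean omega r beta) ->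
  mean omega r un = mean omega r un1 ->
  0 < mean omega r un1 < 1 ->
  forall i,
    mean omega r un1 - 1 <= beta i - mean omega r beta <= mean omega r un1 /\
    -1 <= beta i <= 1.
Proof.
move=> [_ w0 _ _] _ e0 t0 te u01 [u101 hB] heq _ hm.
have w01 := heat01 r w0 (ltW t0) u01.
set lam := tau / eps.
have lam0 : 0 < lam by rewrite divr_gt0.
set ub := mean omega r un1.
set bb := mean omega r beta.
set m := fun i => powR (Defs.degree omega i) r.
have m0 : forall i, 0 <= m i by move=> i; exact: powR_ge0.
set M := mass omega r (fun _ => 1).
have ME : M = \sum_i m i by rewrite /M /mass; apply: eq_bigr => i _; rewrite mul1r.
have M0 : 0 < M.
  rewrite lt_def ME sumr_ge0 // andbT -ME; apply/eqP => M0.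
  by move: hm; rewrite /ub /mean -/M M0 invr0 mulr0 ltxx.
have ubE : \sum_i un1 i * m i = ub * M.
  by rewrite /ub /mean -/M divfK // gt_eqF.
have bbE : \sum_i beta i * m i = bb * M.
  by rewrite /bb /mean -/M divfK // gt_eqF.
have F0 : forall i, un1 i = 0 -> 0 <= beta i /\ beta i <= ub + bb.
  move=> i h; have [hb _ _] := hB i; split; first exact: hb h.
  have := heq i; rewrite h; have := w01 i; set w := heat_semigroup _ _ _ _ _.
  move=> /andP[wa wb] e; rewrite -/lam -/ub -/bb in e; nra.
have F1 : forall i, un1 i = 1 -> ub - 1 + bb <= beta i /\ beta i <= 0.
  move=> i h; have [_ _ hb] := hB i; split; last exact: hb h.
  have := heq i; rewrite h; have := w01 i; set w := heat_semigroup _ _ _ _ _.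
  move=> /andP[wa wb] e; rewrite -/lam -/ub -/bb in e; nra.
have Fc : forall i, un1 i <> 0 -> un1 i <> 1 -> beta i = 0 /\ 0 < un1 i < 1.
  move=> i h0 h1; have [_ hb _] := hB i; have /andP[ua ub1] := u101 i.
  have hu : 0 < un1 i < 1.
    have n0 : un1 i != 0 by apply/eqP.
    have n1 : 1 != un1 i by rewrite eq_sym; apply/eqP.
    by rewrite !lt_def ua ub1 n0 n1.
  by split => //; exact: hb.
have cases : forall i, [\/ un1 i = 0, un1 i = 1 | un1 i <> 0 /\ un1 i <> 1].
  move=> i; case: (eqVneq (un1 i) 0) => [->|h0]; first by constructor 1.
  case: (eqVneq (un1 i) 1) => [->|h1]; first by constructor 2.
  by constructor 3; split; apply/eqP.
have /andP[ub0 ub1] : 0 < ub < 1 by [].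
clearbody lam ub bb M m.
have sum0 : \sum_i (beta i - bb) * m i = 0.
  under eq_bigr do rewrite mulrBl.
  by rewrite sumrB bbE -mulr_sumr -ME subrr.

have bbl : bb <= 1 - ub.
  rewrite leNgt; apply/negP => hbb.
  have : \sum_i (beta i - bb) * m i <= \sum_i (ub - (bb + ub) * un1 i) * m i.
    apply: ler_sum => i _; apply: ler_wpM2r => //.
    case: (cases i) => [h|h|[h0 h1]].
    - have [_ ?] := F0 i h; rewrite h; lra.
    - have [_ ?] := F1 i h; rewrite h; lra.
    - have [-> /andP[ua ua1]] := Fc i h0 h1; nra.
  rewrite sum0.
  under eq_bigr do rewrite mulrBl -mulrA.
  rewrite sumrB -!mulr_sumr ubE -ME => h.
  have : 0 < ub * M * (bb + ub - 1) by apply: mulr_gt0; [exact: mulr_gt0 ub0 M0 | lra].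
  nra.
have bbg : - ub <= bb.
  rewrite leNgt; apply/negP => hbb.
  have : \sum_i (- bb + (ub - 1 + bb) * un1 i) * m i <= \sum_i (beta i - bb) * m i.
    apply: ler_sum => i _; apply: ler_wpM2r => //.
    case: (cases i) => [h|h|[h0 h1]].
    - have [? _] := F0 i h; rewrite h; lra.
    - have [? _] := F1 i h; rewrite h; lra.
    - have [-> /andP[ua ua1]] := Fc i h0 h1; nra.
  rewrite sum0.
  under eq_bigr do rewrite mulrDl -mulrA.
  rewrite big_split /= -!mulr_sumr ubE -ME => h.
  have : 0 < M * (1 - ub) * (- bb - ub) by apply: mulr_gt0; [apply: mulr_gt0 => //; lra | lra].
  nra.
move=> i.
case: (cases i) => [h|h|[h0 h1]].
- have [? ?] := F0 i h; split; apply/andP; split; lra.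
- have [? ?] := F1 i h; split; apply/andP; split; lra.
- have [-> _] := Fc i h0 h1; split; apply/andP; split; lra.
Qed.
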